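(* Fix $R>0$, an integer $T>1$ and $\alpha>1$. Let $\Theta_1=(\alpha,\rho_{r_1},\rho_{d_1},\rho_{s_1},\rho_{0_1},T)$ and $\Theta_2=(\alpha,\rho_{r_2},\rho_{d_2},\rho_{s_2},\rho_{0_2},T)$ with all $\rho$'s positive. If $\rho_{r_2}\ge\rho_{r_1}$, $\rho_{d_2}\ge\rho_{d_1}$, $\rho_{s_2}\ge\rho_{s_1}$ and $\rho_{0_2}\ge\rho_{0_1}$, with at least one of these inequalities strict, then $\zeta^\star_{zf}(R,\Theta_1)>\zeta^\star_{zf}(R,\Theta_2)$.
   Context: For $\Theta=(\alpha,\rho_r,\rho_d,\rho_s,\rho_0,T)$ with $\alpha>1$, $\rho_r,\rho_d,\rho_s,\rho_0>0$, integer $T>1$, and $R>0$: for $M>K$, $1\le K\le\tau<T$ let $$\gamma_u=\frac{K+\tau}{2\tau(M-K)}\Big(2^{\frac{R}{K(1-\tau/T)}}-1\Big)+\sqrt{\Big(\frac{K+\tau}{2\tau(M-K)}\Big(2^{\frac{R}{K(1-\tau/T)}}-1\Big)\Big)^2+\frac{2^{\frac{R}{K(1-\tau/T)}}-1}{\tau(M-K)}}$$ and define $\zeta_{zf}(M,K,\tau,R,\Theta)>0$ by $$\frac{R}{\zeta_{zf}(M,K,\tau,R,\Theta)}=\alpha K\gamma_u+\rho_s+K\Big(\rho_d+\frac{8K^2\rho_0}{3T}\Big)+M\Big(\rho_r+2K\rho_0+\frac{4K^2\rho_0}{T}\Big).$$ $\zeta^\star_{zf}(R,\Theta)$ is the maximum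 of $\zeta_{zf}(M,K,\tau,R,\Theta)$ over integers $(M,K,\tau)$ with $1\le K\le\tau<T$ and $M>K$. *)

(* Defs.v *)
From HB Require Import structures.
From mathcomp Require Import all_boot all_order all_algebra.
From mathcomp Require Import all_classical all_reals all_analysis.
Set Implicit Arguments. Unset Strict Implicit. Unset Printing Implicit Defensive.
Import Order.TTheory GRing.Theory Num.Theory.
Local Open Scope classical_set_scope.
Local Open Scope ring_scope.

Section ZF.
Variable R : realType.

Definition zf_e (Rt : R) (K tau T : nat) : R :=
  powR 2 (Rt / (K%:R * (1 - tau%:R / T%:R))) - 1.

Definition gamma_u (Rt : R) (M K tau T : nat) : R :=
  let e := zf_e Rt K tau T in
  let a := (K%:R + tau%:R) / (2 * tau%:R * (M%:R - K%:R)) * e in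
  a + Num.sqrt (a ^+ 2 + e / (tau%:R * (M%:R - K%:R))).

Definition zeta_zf (M K tau : nat) (Rt alpha rho_r rho_d rho_s rho_0 : R) (T : nat) : R :=
  Rt / (alpha * K%:R * gamma_u Rt M K tau T + rho_s
        + K%:R * (rho_d + 8 * K%:R ^+ 2 * rho_0 / (3 * T%:R))
        + M%:R * (rho_r + 2 * K%:R * rho_0 + 4 * K%:R ^+ 2 * rho_0 / T%:R)).

Definition zeta_zf_values (Rt alpha rho_r rho_d rho_s rho_0 : R) (T : nat) : set R :=
  [set z | exists M K tau : nat,
      [/\ (1 <= K)%N, (K <= tau)%N, (tau < T)%N, (K < M)%N &
          z = zeta_zf M K tau Rt alpha rho_r rho_d rho_s rho_0 T]].

(* zeta*_zf(R,Theta): the maximum (taken as the supremum; it is attained) *)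
Definition zeta_star_zf (Rt alpha rho_r rho_d rho_s rho_0 : R) (T : nat) : R :=
  sup (zeta_zf_values Rt alpha rho_r rho_d rho_s rho_0 T).
End ZF.

(* Main.v *)
Require Import Defs.
From mathcomp Require Import all_boot all_order all_algebra.
From mathcomp Require Import all_classical all_reals all_analysis.
From mathcomp Require Import ring lra zify.
Import Order.TTheory GRing.Theory Num.Theory.
Local Open Scope classical_set_scope.
Local Open Scope ring_scope.

Lemma gamma_ge0 (R : realType) (Rt : R) (M K tau T : nat) :
  0 < Rt -> (1 <= K)%N -> (K <= tau)%N -> (tau < T)%N -> (K < M)%N ->
  0 <= gamma_u Rt M K tau T.
Proof.
move=> Rt0 K1 Kt tT KM.
have e0 : 0 <= zf_e Rt K tau T.
  rewrite /zf_e subr_ge0.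
  have h := @ler_powR R 2 _ 0 (Rt / (K%:R * (1 - tau%:R / T%:R))).
  rewrite powRr0 in h; apply: h; first lra.
  apply: divr_ge0; first lra.
  apply: mulr_ge0; first by rewrite ler0n.
  rewrite subr_ge0 ler_pdivrMr ?ltr0n; last by lia.
  by rewrite mul1r ler_nat ltnW.
have MK : 0 < M%:R - K%:R :> R by rewrite subr_gt0 ltr_nat.
have t0 : 0 < tau%:R :> R by rewrite ltr0n; lia.
rewrite /gamma_u; apply: addr_ge0; last exact: sqrtr_ge0.
apply: mulr_ge0 => //; apply: divr_ge0.
  by apply: addr_ge0; rewrite ler0n.
apply: mulr_ge0; last lra.
apply: mulr_ge0; lra.
Qed.

Definition den {R : realType} (Rt alpha : R) (M K tau T : nat) (r d s o : R) :=
  alpha * K%:R * gamma_u Rt M K tau T + s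
        + K%:R * (d + 8 * K%:R ^+ 2 * o / (3 * T%:R))
        + M%:R * (r + 2 * K%:R * o + 4 * K%:R ^+ 2 * o / T%:R).

Lemma den_diff (R : realType) (Rt alpha : R) (M K tau T : nat) (r1 d1 s1 o1 r2 d2 s2 o2 : R) :
  0 < alpha -> 0 <= gamma_u Rt M K tau T -> (1 <= K)%N -> (1 <= M)%N -> (1 <= T)%N ->
  0 < r1 -> 0 < d1 -> 0 < s1 -> 0 < o1 ->
  r1 <= r2 -> d1 <= d2 -> s1 <= s2 -> o1 <= o2 ->
  s1 <= den Rt alpha M K tau T r1 d1 s1 o1 /\
  den Rt alpha M K tau T r1 d1 s1 o1 + ((r2-r1)+(d2-d1)+(s2-s1)+2*(o2-o1))
    <= den Rt alpha M K tau T r2 d2 s2 o2.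
Proof.
move=> a0 g0 K1 M1 T1 r10 d10 s10 o10 hr hd hs ho.
rewrite /den.
set g := gamma_u _ _ _ _ _ in g0 *.
have k1 : 1 <= K%:R :> R by rewrite ler1n.
have m1 : 1 <= M%:R :> R by rewrite ler1n.
have t0 : 0 < T%:R :> R by rewrite ltr0n.
set k := K%:R in k1 *; set m := M%:R in m1 *.
have P1 : forall o : R, 0 <= o -> 0 <= 8 * k ^+ 2 * o / (3 * T%:R).
  move=> o o0; apply: divr_ge0; last lra.
  apply: mulr_ge0 => //; apply: mulr_ge0 => //; exact: sqr_ge0.
have P2 : forall o : R, 0 <= o -> 0 <= 4 * k ^+ 2 * o / T%:R.
  move=> o o0; apply: divr_ge0; last lra.
  apply: mulr_ge0 => //; apply: mulr_ge0 => //; exact: sqr_ge0.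
have Q1 : 8 * k ^+ 2 * o1 / (3 * T%:R) <= 8 * k ^+ 2 * o2 / (3 * T%:R).
  rewrite -subr_ge0 -mulrBl -mulrBr; apply: P1; lra.
have Q2 : 4 * k ^+ 2 * o1 / T%:R <= 4 * k ^+ 2 * o2 / T%:R.
  rewrite -subr_ge0 -mulrBl -mulrBr; apply: P2; lra.
have := P1 o1 (ltW o10); have := P2 o1 (ltW o10).
set A1 := 8 * _ * o1 / _ in Q1 *; set A2 := 8 * _ * o2 / _ in Q1 *.
set B1 := 4 * _ * o1 / _ in Q2 *; set B2 := 4 * _ * o2 / _ in Q2 *.
move=> HB HA.
have ag : 0 <= alpha * k * g by apply: mulr_ge0 => //; apply: mulr_ge0; lra.
have h1 : 0 <= k * (d1 + A1) by apply: mulr_ge0; lra.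
have h2 : 0 <= m * (r1 + 2 * k * o1 + B1).
  apply: mulr_ge0; first lra.
  have : 0 <= k * o1 by apply: mulr_ge0; lra.
  lra.
split; first lra.
have h3 : k * (d1 + A1) + (d2 - d1) <= k * (d2 + A2) by nra.
have h4 : k * o1 + (o2 - o1) <= k * o2 by nra.
have h5 : m * (r1 + 2 * k * o1 + B1) + ((r2 - r1) + 2 * (o2 - o1)) <= m * (r2 + 2 * k * o2 + B2).
  have h6 : 0 <= (r2 - r1) + 2 * (k * o2 - k * o1) + (B2 - B1) by nra.
  have : m * (r2 + 2 * k * o2 + B2) = m * (r1 + 2 * k * o1 + B1) + m * ((r2 - r1) + 2 * (k * o2 - k * o1) + (B2 - B1)) by ring.
  move=> ->; nra.
lra.
Qed.

Lemma keyR (R : realType) (Rt D d B S D' : R) :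
  0 < Rt -> 0 < D -> 0 < d -> 0 < B -> 0 <= S -> Rt <= S * D ->
  2 * Rt <= S * B -> D + d <= D' -> Rt * (B + d) <= S * B * D'.
Proof.
move=> *; have [DB|DB] := lerP D B; nra.
Qed.

Theorem theorem1 (R : realType) (Rt alpha : R) (T : nat)
    (r1 d1 s1 o1 r2 d2 s2 o2 : R) :
  0 < Rt -> (1 < T)%N -> 1 < alpha ->
  0 < r1 -> 0 < d1 -> 0 < s1 -> 0 < o1 ->
  0 < r2 -> 0 < d2 -> 0 < s2 -> 0 < o2 ->
  r1 <= r2 -> d1 <= d2 -> s1 <= s2 -> o1 <= o2 ->
  (r1 < r2 \/ d1 < d2 \/ s1 < s2 \/ o1 < o2) ->
  zeta_star_zf Rt alpha r2 d2 s2 o2 T < zeta_star_zf Rt alpha r1 d1 s1 o1 T.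
Proof.
move=> Rt0 T1 a1 r10 d10 s10 o10 r20 d20 s20 o20 hr hd hs ho hstrict.
have a0 : 0 < alpha by lra.
set dl := (r2-r1)+(d2-d1)+(s2-s1)+2*(o2-o1).
have dl0 : 0 < dl by rewrite /dl; case: hstrict => [|[|[|]]]; lra.
have zE : forall M K tau r d s o,
  zeta_zf M K tau Rt alpha r d s o T = Rt / den Rt alpha M K tau T r d s o by [].
have H := fun M K tau (K1 : (1 <= K)%N) (Kt : (K <= tau)%N) (tT : (tau < T)%N) (KM : (K < M)%N) =>
  @den_diff R Rt alpha M K tau T r1 d1 s1 o1 r2 d2 s2 o2 a0 (@gamma_ge0 R Rt M K tau T Rt0 K1 Kt tT KM) K1 (ltnW (leq_ltn_trans K1 KM)) (ltnW T1)
     r10 d10 s10 o10 hr hd hs ho.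
rewrite /zeta_star_zf.
set V2 := zeta_zf_values _ _ _ _ _ _ _.
set V1 := zeta_zf_values _ _ _ _ _ _ _.
set S1 := sup V1.
have P0 : [/\ (1 <= 1)%N, (1 <= 1)%N, (1 < T)%N & (1 < 2)%N] by [].
have V1n : V1 !=set0.
  exists (zeta_zf 2 1 1 Rt alpha r1 d1 s1 o1 T); exists 2%N, 1%N, 1%N; split => //.
have V2n : V2 !=set0.
  exists (zeta_zf 2 1 1 Rt alpha r2 d2 s2 o2 T); exists 2%N, 1%N, 1%N; split => //.
have hs1 : has_sup V1.
  split => //; exists (Rt / s1) => z [M [K [tau [K1 Kt tT KM ->]]]].
  rewrite zE; have [h1 _] := H M K tau K1 Kt tT KM.
  rewrite ler_pM2l // lef_pV2 ?posrE //; lra.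
have ub := sup_upper_bound hs1.
have z0pos : 0 < zeta_zf 2 1 1 Rt alpha r1 d1 s1 o1 T.
  rewrite zE; have [h1 _] := H 2%N 1%N 1%N isT isT T1 isT.
  apply: divr_gt0 => //; lra.
have z0S : zeta_zf 2 1 1 Rt alpha r1 d1 s1 o1 T <= S1.
  by apply: ub; exists 2%N, 1%N, 1%N.
move: (zeta_zf 2 1 1 Rt alpha r1 d1 s1 o1 T) z0pos z0S => z0 z0pos z0S.
have S0 : 0 < S1 by lra.
set B := 2 * Rt / z0 + dl.
have B0 : 0 < B.
  have : 0 < 2 * Rt / z0 by apply: divr_gt0 => //; lra.
  rewrite /B; lra.
have BS : 2 * Rt <= S1 * B.
  have : 2 * Rt <= z0 * B.
    rewrite /B mulrDr mulrCA mulfV ?gt_eqF // mulr1.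
    have : 0 < z0 * dl by apply: mulr_gt0.
    lra.
  nra.
have le2 : sup V2 <= S1 * B / (B + dl).
  apply: ge_sup => // z [M [K [tau [K1 Kt tT KM ->]]]].
  rewrite zE; have [h1 h2] := H M K tau K1 Kt tT KM.
  have hz : zeta_zf M K tau Rt alpha r1 d1 s1 o1 T <= S1 by apply: ub; exists M, K, tau.
  rewrite zE ler_pdivrMr in hz; last lra.
  have D2 : 0 < den Rt alpha M K tau T r2 d2 s2 o2 by lra.
  rewrite ler_pdivrMr // mulrAC ler_pdivlMr; last lra.
  apply: (@keyR R Rt (den Rt alpha M K tau T r1 d1 s1 o1)) => //; try lra.
apply: (le_lt_trans le2).
rewrite ltr_pdivrMr; last lra.
nra.
Qed.
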